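(* Consider the discrete-time nonlinear system $x^+=AM(x)+Bu$ with (unknown) $A\in\mathbb{R}^{n\times N}$, $B\in\mathbb{R}^{n\times m}$, $M(x)=\begin{bmatrix}x\\ \mathcal{Z}(x)\end{bmatrix}\in\mathbb{R}^N$, $\mathcal{Z}:\mathbb{R}^n\to\mathbb{R}^{N-n}$, state set $X\subset\mathbb{R}^n$, initial set $X_{\mathcal I}\subset X$, unsafe set $X_{\mathcal U}\subset X$. Let $\mathcal{U}_0=[u(0),\dots,u(T-1)]$, $\mathcal{X}_1=[x(1),\dots,x(T)]$ and $\mathcal{M}_0=[M(x(0)),\dots,M(x(T-1))]\in\mathbb{R}^{N\times T}$ be built from a single trajectory $x(t+1)=AM(x(t))+Bu(t)$. Let $Q=[Q_1~Q_2]$ with $Q_1\in\mathbb{R}^{T\times n}$, $Q_2\in\mathbb{R}^{T\times(N-n)}$ and suppose $\mathcal{X}_1Q_2=\mathbf{0}_{n\times(N-n)}$. Suppose there exist a symmetric positive-definite $P\in\mathbb{R}^{n\times n}$ and $H\in\mathbb{R}^{T\times n}$ with $Q_1=HP$, and constants $\gamma,\lambda\in\mathbb{R}_{\ge0}$ with $\lambda>\gamma$, such that (i) $\mathcal{M}_0Q_2=\begin{bmatrix}\mathbf{0}_{n\times(N-n)}\\ \mathbb{I}_{N-n}\end{bmatrix}$; (ii) $\mathcal{M}_0H=\begin{bmatrix}P^{-1}\\ \mathbf{0}_{(N-n)\times n}\end{bmatrix}$; (iii) $x^\top Px\le\gamma$ for all $x\in X_{\mathcal I}$; (iv) $x^\top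 Px\ge\lambda$ for all $x\in X_{\mathcal U}$; (v) $\begin{bmatrix}P^{-1} & \mathcal{X}_1H\\ H^\top\mathcal{X}_1^\top & P^{-1}\end{bmatrix}\succeq0$. Then $\mathcal{B}(x)=x^\top Px$ is a (conventional, $k=1$) control barrier certificate and $u=\mathcal{U}_0QM(x)$ is a corresponding safety controller; that is, $\mathcal{B}\le\gamma$ on $X_{\mathcal I}$, $\mathcal{B}\ge\lambda$ on $X_{\mathcal U}$, and for all $x\in X$, with $x^+=AM(x)+B\,\mathcal{U}_0QM(x)$, $\mathcal{B}(x^+)\le\mathcal{B}(x)$.
   Context: $\mathbb{I}_{N-n}$ denotes the identity and $\mathbf{0}$ zero matrices of the indicated sizes; $\succeq0$ means positive semidefinite. A control barrier certificate (CBC) is a function $\mathcal{B}:X\to\mathbb{R}_{\ge0}$ with $\gamma,\lambda\ge0$, $\lambda>\gamma$, such that $\mathcal{B}\le\gamma$ on $X_{\mathcal I}$, $\mathcal{B}\ge\lambda$ on $X_{\mathcal U}$, and for all $x\in X$ there is an input with $\mathcal{B}(x^+)\le\mathcal{B}(x)$; a feedback realizing this is a safety controller. *)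

(* Defs.v *)
From HB Require Import structures.
From mathcomp Require Import all_boot all_order all_algebra.
Set Implicit Arguments. Unset Strict Implicit. Unset Printing Implicit Defensive.
Import Order.TTheory GRing.Theory Num.Theory.
Local Open Scope ring_scope.

Section Defs.
Variable R : realFieldType.

Definition qform n (S : 'M[R]_n) (v : 'cV[R]_n) : R := (v^T *m S *m v) 0 0.

Definition posdef n (S : 'M[R]_n) : Prop :=
  S^T = S /\ (forall v : 'cV[R]_n, v != 0 -> 0 < qform S v).

Definition psd n (S : 'M[R]_n) : Prop :=
  S^T = S /\ (forall v : 'cV[R]_n, 0 <= qform S v).

(* lifted state M(x) = [x; Z(x)] with N = n + k *)
Definition liftM n k (Z : 'cV[R]_n -> 'cV[R]_k) (x : 'cV[R]_n) : 'cV[R]_(n + k) :=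
  col_mx x (Z x).

Definition dataU0 m T (u : nat -> 'cV[R]_m) : 'M[R]_(m, T) :=
  \matrix_(i < m, j < T) u j i 0.
Definition dataX1 n T (x : nat -> 'cV[R]_n) : 'M[R]_(n, T) :=
  \matrix_(i < n, j < T) x j.+1 i 0.
Definition dataM0 n k T (Z : 'cV[R]_n -> 'cV[R]_k) (x : nat -> 'cV[R]_n)
  : 'M[R]_(n + k, T) :=
  \matrix_(i < n + k, j < T) liftM Z (x j) i 0.

Definition is_CBC_with_controller n m (X XI XU : 'cV[R]_n -> Prop)
  (f : 'cV[R]_n -> 'cV[R]_m -> 'cV[R]_n) (Bc : 'cV[R]_n -> R)
  (gamma lambda : R) (ctrl : 'cV[R]_n -> 'cV[R]_m) : Prop :=
  [/\ (forall x, X x -> 0 <= Bc x),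
      0 <= gamma /\ 0 <= lambda /\ gamma < lambda,
      (forall x, XI x -> Bc x <= gamma),
      (forall x, XU x -> lambda <= Bc x) &
      (forall x, X x -> Bc (f x (ctrl x)) <= Bc x)].
End Defs.

(* Main.v *)
Require Import Defs.
From HB Require Import structures.
From mathcomp Require Import all_boot all_order all_algebra.
Import Order.TTheory GRing.Theory Num.Theory.
Local Open Scope ring_scope.

Theorem corollary1 (R : realFieldType) (n k m T : nat)
  (A : 'M[R]_(n, n + k)) (B : 'M[R]_(n, m)) (Z : 'cV[R]_n -> 'cV[R]_k)
  (X XI XU : 'cV[R]_n -> Prop)
  (HXI : forall x, XI x -> X x) (HXU : forall x, XU x -> X x)
  (x : nat -> 'cV[R]_n) (u : nat -> 'cV[R]_m)
  (Htraj : forall t, (t < T)%N -> x t.+1 = A *m liftM Z (x t) + B *m u t)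
  (Q1 : 'M[R]_(T, n)) (Q2 : 'M[R]_(T, k))
  (HX1Q2 : dataX1 T x *m Q2 = 0)
  (P : 'M[R]_n) (H : 'M[R]_(T, n)) (gamma lambda : R)
  (HP : posdef P) (HQ1 : Q1 = H *m P)
  (Hgamma : 0 <= gamma) (Hlambda : 0 <= lambda) (Hgl : gamma < lambda)
  (Hi : dataM0 T Z x *m Q2 = col_mx (0 : 'M[R]_(n, k)) (1%:M : 'M[R]_k))
  (Hii : dataM0 T Z x *m H = col_mx (invmx P) (0 : 'M[R]_(k, n)))
  (Hiii : forall z, XI z -> qform P z <= gamma)
  (Hiv : forall z, XU z -> lambda <= qform P z)
  (Hv : psd (block_mx (invmx P) (dataX1 T x *m H)
                      ((dataX1 T x *m H)^T) (invmx P))) :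
  is_CBC_with_controller X XI XU
    (fun z v => A *m liftM Z z + B *m v)
    (qform P) gamma lambda
    (fun z => dataU0 T u *m row_mx Q1 Q2 *m liftM Z z).
Proof.
case: HP => PT Ppos.
have qge0 : forall v, 0 <= qform P v.
  move=> v; have [->|nz] := eqVneq v 0; last exact: ltW (Ppos _ nz).
  by rewrite /qform mulmx0 mxE.
have Punit : P \in unitmx.
  rewrite unitmxE unitfE; apply/negP => /det0P [w wnz wP].
  have : 0 < qform P w^T by apply: Ppos; rewrite trmx_eq0.
  by rewrite /qform trmxK wP mul0mx mxE ltxx.
have PiP : invmx P *m P = 1%:M by rewrite mulVmx.
have PPi : P *m invmx P = 1%:M by rewrite mulmxV.
set M0 := dataM0 T Z x in Hi Hii *; set X1 := dataX1 T x in HX1Q2 Hv *.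
set U0 := dataU0 T u.
have Edata : X1 = A *m M0 + B *m U0.
  apply/matrixP => i j; rewrite !mxE (Htraj _ (ltn_ord j)) !mxE.
  congr (_ + _); apply: eq_bigr => l _; rewrite !mxE //.
have MQ : M0 *m row_mx Q1 Q2 = 1%:M.
  rewrite mul_mx_row HQ1 mulmxA Hii Hi mul_col_mx PiP mul0mx.
  by rewrite -block_mxEh -scalar_mx_block.
split => //.
- move=> z Xz.
  set G := X1 *m H.
  have Enext : A *m liftM Z z + B *m (U0 *m row_mx Q1 Q2 *m liftM Z z)
             = G *m (P *m z).
    have -> : A *m liftM Z z = A *m M0 *m row_mx Q1 Q2 *m liftM Z z.
      by rewrite -(mulmxA A M0) MQ mulmx1.
    rewrite !(mulmxA B) -!mulmxDl -Edata -mulmxA.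
    rewrite /liftM mul_row_col mulmxDr !mulmxA HX1Q2 mul0mx addr0 HQ1.
    by rewrite /G !mulmxA.
  rewrite Enext.
  set y := P *m z.
  set a := - (P *m (G *m y)).
  case: Hv => _ /(_ (col_mx a y)).
  have E : (col_mx a y)^T *m block_mx (invmx P) G G^T (invmx P) *m col_mx a y
     = z^T *m P *m z - (G *m y)^T *m P *m (G *m y).
    have PPiK : forall p (W : 'M_(p, n)), W *m P *m invmx P = W.
      by move=> p W; rewrite -mulmxA PPi mulmx1.
    have PiPK : forall p (W : 'M_(p, n)), W *m invmx P *m P = W.
      by move=> p W; rewrite -mulmxA PiP mulmx1.
    rewrite tr_col_mx mul_row_block mul_row_col /a /y.
    have trN : forall p q (W : 'M[R]_(p, q)), (- W)^T = - W^T.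
      by move=> p q W; apply/matrixP => i j; rewrite !mxE.
    rewrite !trN !trmx_mul PT.
    rewrite !(mulmxN, mulNmx, mulmxDl, opprK) !mulmxA ?PPiK ?PiPK.
    by rewrite addNr oppr0 add0r addrC.
  by rewrite /qform E !mxE subr_ge0.
Qed.
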